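(* Let $K$ be a field, let $A=\{{\bf a}_1,\ldots,{\bf a}_n\}\subset\mathbb{Z}^m$ with $\mathbb{N}A$ pointed, and let $I_A\subset K[x_1,\ldots,x_n]$ be its toric ideal. Then $I_A$ is radical splittable if and only if there exist a set $C\subset\ker_{\mathbb{Z}}(A)$ such that $\{B({\bf u})\mid{\bf u}\in C\}$ is a minimal system of binomial generators of $I_A$ up to radical, and sets $C_1,C_2$ with $C=C_1\cup C_2$, $\mathrm{span}_{\mathbb{Q}}(C_1)\subsetneqq\ker_{\mathbb{Q}}(A)$ and $\mathrm{span}_{\mathbb{Q}}(C_2)\subsetneqq\ker_{\mathbb{Q}}(A)$.
   Context: $\ker_{\mathbb{Q}}(A)=\{{\bf u}\in\mathbb{Q}^n\mid \sum u_i{\bf a}_i={\bf 0}\}$, $\ker_{\mathbb{Z}}(A)=\ker_{\mathbb{Q}}(A)\cap\mathbb{Z}^n$; $\mathbb{N}A$ pointed means $\ker_{\mathbb{Z}}(A)\cap\mathbb{N}^n=\{{\bf 0}\}$. The toric ideal $I_A$ is the kernel of $K[x_1,\ldots,x_n]\to K[t_1^{\pm1},\ldots,t_m^{\pm1}]$, $x_i\mapsto{\bf t}^{{\bf a}_i}$; for ${\bf u}\in\ker_{\mathbb{Z}}(A)$, $B({\bf u})={\bf x}^{{\bf u}^+}-{\bf x}^{{\bf u}^-}$ with ${\bf u}^\pm\in\mathbb{N}^n$ the positive/negative parts of ${\bf u}$. $I_A$ is radical splittable if there exist toric ideals $I_{A_1},I_{A_2}\subset K[x_1,\ldots,x_n]$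 (each $A_i$ a configuration of $n$ integer vectors with $\mathbb{N}A_i$ pointed) with $I_A=\mathrm{rad}(I_{A_1}+I_{A_2})$ and $I_{A_i}\ne I_A$ for $i=1,2$. A minimal system of binomial generators of $I_A$ up to radical is a set $S$ of binomials with $\mathrm{rad}(S)=I_A$ such that no proper subset of $S$ has radical equal to $I_A$. $\mathrm{span}_{\mathbb{Q}}(C)$ denotes the $\mathbb{Q}$-linear span. *)

(* Defs.v *)
From HB Require Import structures.
From mathcomp Require Import all_boot all_order all_algebra.
From mathcomp Require Import mpoly.
Set Implicit Arguments. Unset Strict Implicit. Unset Printing Implicit Defensive.
Import Order.TTheory GRing.Theory Num.Theory.
Local Open Scope ring_scope.

(* A configuration A = {a_1,...,a_n} in Z^m is an m x n integer matrix whose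
   i-th column is a_i.  Integer vectors of Z^n are column vectors 'cV[int]_n. *)

Definition mexp (n : nat) (b : 'X_{1..n}) : 'cV[int]_n := \col_i (b i)%:Z.

Definition kerZ (m n : nat) (A : 'M[int]_(m, n)) (u : 'cV[int]_n) : Prop :=
  A *m u = 0.

Definition kerQ (m n : nat) (A : 'M[int]_(m, n)) (v : 'cV[rat]_n) : Prop :=
  map_mx intr A *m v = 0.

(* NA pointed: ker_Z(A) cap N^n = {0} *)
Definition pointed (m n : nat) (A : 'M[int]_(m, n)) : Prop :=
  forall u : 'cV[int]_n, kerZ A u -> (forall i, 0 <= u i 0) -> u = 0.

(* Toric ideal I_A: kernel of x_i |-> t^{a_i} into K[t^{+-1}] (the group
   algebra of Z^m).  The image of f = sum_b f_b x^b is sum_b f_b t^{A b};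
   f is in the kernel iff the coefficient of every Laurent monomial t^w of
   the image vanishes. *)
Definition toric_ideal (K : fieldType) (m n : nat) (A : 'M[int]_(m, n))
  (f : {mpoly K[n]}) : Prop :=
  forall w : 'cV[int]_m, \sum_(b <- msupp f | A *m mexp b == w) f@_b = 0.

Arguments toric_ideal K {m n} A f.

Definition posm (n : nat) (u : 'cV[int]_n) : 'X_{1..n} :=
  [multinom absz (Num.max (u i ord0) 0%R) | i < n].
Definition negm (n : nat) (u : 'cV[int]_n) : 'X_{1..n} :=
  [multinom absz (Num.max (- u i ord0)%R 0%R) | i < n].

Definition binom (K : fieldType) (n : nat) (u : 'cV[int]_n) : {mpoly K[n]} :=
  'X_[posm u] - 'X_[negm u].

Arguments binom K {n} u.

Definition ideal_gen (K : fieldType) (n : nat) (S : {mpoly K[n]} -> Prop)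
  (f : {mpoly K[n]}) : Prop :=
  exists r : seq ({mpoly K[n]} * {mpoly K[n]}),
    (forall p, p \in r -> S p.2) /\ f = \sum_(p <- r) p.1 * p.2.

Definition rad (K : fieldType) (n : nat) (S : {mpoly K[n]} -> Prop)
  (f : {mpoly K[n]}) : Prop :=
  exists k : nat, ideal_gen S (f ^+ k).

Definition set_eq (T : Type) (P Q : T -> Prop) : Prop := forall x, P x <-> Q x.

Definition radical_splittable (K : fieldType) (m n : nat)
  (A : 'M[int]_(m, n)) : Prop :=
  exists (m1 m2 : nat) (A1 : 'M[int]_(m1, n)) (A2 : 'M[int]_(m2, n)),
    [/\ pointed A1, pointed A2,
        set_eq (toric_ideal K A)
               (rad (fun f => toric_ideal K A1 f \/ toric_ideal K A2 f)),
        ~ set_eq (toric_ideal K A1) (toric_ideal K A)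
      & ~ set_eq (toric_ideal K A2) (toric_ideal K A)].

Definition is_binomial (K : fieldType) (n : nat) (f : {mpoly K[n]}) : Prop :=
  exists (a b : 'X_{1..n}), f = 'X_[a] - 'X_[b].

Arguments radical_splittable K {m n} A.

Definition min_binom_gen_up_to_rad (K : fieldType) (m n : nat)
  (A : 'M[int]_(m, n)) (S : {mpoly K[n]} -> Prop) : Prop :=
  [/\ forall f, S f -> is_binomial f,
      set_eq (rad S) (toric_ideal K A)
    & forall S' : {mpoly K[n]} -> Prop, (forall f, S' f -> S f) ->
        ~ (exists f, S f /\ ~ S' f) \/ ~ set_eq (rad S') (toric_ideal K A)].

Definition spanQ (n : nat) (C : 'cV[int]_n -> Prop) (v : 'cV[rat]_n) : Prop :=
  exists r : seq (rat * 'cV[int]_n),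
    (forall p, p \in r -> C p.2) /\ v = \sum_(p <- r) p.1 *: map_mx intr p.2.

Definition span_proper_in_kerQ (m n : nat) (A : 'M[int]_(m, n))
  (C : 'cV[int]_n -> Prop) : Prop :=
  (forall v, spanQ C v -> kerQ A v) /\ (exists v, kerQ A v /\ ~ spanQ C v).

(* Main.v *)
Require Import Defs.
From HB Require Import structures.
From mathcomp Require Import all_boot all_order all_algebra.
From mathcomp Require Import mpoly.
From mathcomp Require Import zify ring lra.
From Stdlib Require Import Classical ClassicalEpsilon.
Import Order.TTheory GRing.Theory Num.Theory.
Local Open Scope ring_scope.

Set Implicit Arguments. Unset Strict Implicit. Unset Printing Implicit Defensive.

Lemma leq_sum_mem (T : eqType) (s : seq T) (F : T -> nat) x :
  x \in s -> (F x <= \sum_(y <- s) F y)%N.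
Proof.
elim: s => //= y s IH; rewrite in_cons big_cons => /orP [/eqP ->|/IH h].
  exact: leq_addr.
by apply: (leq_trans h); apply: leq_addl.
Qed.

Definition mnmv (m : nat) (w : 'cV[int]_m) : 'X_{1..m} :=
  [multinom absz (w j ord0) | j < m].

Lemma mpolyX_inj (K : fieldType) (m : nat) (a b : 'X_{1..m}) :
  'X_[a] = 'X_[b] :> {mpoly K[m]} -> a = b.
Proof.
move=> h; have := mcoeffX K a a; rewrite h mcoeffX eqxx.
by case: eqP => // _ /eqP; rewrite eq_sym oner_eq0.
Qed.

Lemma mulmx_mexp (m n : nat) (A : 'M[int]_(m, n)) (b : 'X_{1..n}) :
  A *m mexp b = \sum_(i < n) col i A *+ b i.
Proof.
apply/matrixP => j k; rewrite !mxE summxE; apply: eq_bigr => i _.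
by rewrite !mxE ord1 mulmxnE !mxE -mulr_natr natz.
Qed.

Section Psi.
Variables (K : fieldType) (m n : nat) (A : 'M[int]_(m, n)).
Local Notation R := {mpoly K[m]}.
Local Notation F := {fraction R}.

Definition tX (j : 'I_m) : F := tofrac ('X_j : R).
Definition tau (w : 'cV[int]_m) : F := \prod_(j < m) tX j ^ (w j ord0).
Definition cK : {rmorphism K -> F} := (@tofrac _) \o (@mpolyC m K).
Definition psi (f : {mpoly K[n]}) : F := mmap cK (fun i => tau (col i A)) f.

Lemma tX_neq0 j : tX j != 0.
Proof.
rewrite /tX tofrac_eq0; apply/eqP => h.
have := mcoeffX K U_(j)%MM U_(j)%MM; rewrite h mcoeff0 eqxx => /eqP.
by rewrite eq_sym oner_eq0.
Qed.

Lemma tau0 : tau 0 = 1.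
Proof. by rewrite /tau big1 // => j _; rewrite mxE expr0z. Qed.

Lemma tauD (w1 w2 : 'cV[int]_m) : tau (w1 + w2) = tau w1 * tau w2.
Proof.
rewrite /tau -big_split; apply: eq_bigr => j _.
by rewrite mxE expfzDr // tX_neq0.
Qed.

Lemma tau_neq0 (w : 'cV[int]_m) : tau w != 0.
Proof.
rewrite /tau; apply/prodf_neq0 => j _; exact/expfz_neq0/tX_neq0.
Qed.

Lemma tauMn (w : 'cV[int]_m) k : tau (w *+ k) = tau w ^+ k.
Proof. by elim: k => [|k IH]; rewrite ?mulr0n ?expr0 ?tau0 // mulrS tauD IH exprS. Qed.

Lemma tau_sum (I : Type) (r : seq I) (G : I -> 'cV[int]_m) :
  tau (\sum_(i <- r) G i) = \prod_(i <- r) tau (G i).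
Proof.
elim: r => [|i r IH]; first by rewrite !big_nil tau0.
by rewrite !big_cons tauD IH.
Qed.

Lemma tau_nonneg (w : 'cV[int]_m) : (forall j, 0 <= w j ord0) -> tau w = tofrac ('X_[mnmv w] : R).
Proof.
move=> h; rewrite mpolyXE_id rmorph_prod /tau; apply: eq_bigr => j _.
rewrite rmorphXn /mnmv mnmE /tX exprnP; congr (_ ^ _).
by have := h j; lia.
Qed.

Lemma psiE f : psi f = \sum_(b <- msupp f) cK f@_b * tau (A *m mexp b).
Proof.
rewrite /psi /mmap; apply: eq_bigr => b _; congr (_ * _).
rewrite /mmap1 mulmx_mexp tau_sum; apply: eq_bigr => i _.
by rewrite tauMn.
Qed.

Lemma psi_rmorph : multiplicative psi.
Proof. exact: mmap_is_multiplicative. Qed.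

Lemma psiD f g : psi (f + g) = psi f + psi g.
Proof. exact: mmapD. Qed.
Lemma psiN f : psi (- f) = - psi f.
Proof. exact: mmapN. Qed.
Lemma psiM f g : psi (f * g) = psi f * psi g.
Proof. by case: psi_rmorph => h _; apply: h. Qed.
Lemma psi0 : psi 0 = 0.
Proof. exact: mmap0. Qed.
Lemma psiX a : psi 'X_[a] = tau (A *m mexp a).
Proof.
by rewrite psiE msuppX big_seq1 mcoeffX eqxx rmorph1 mul1r.
Qed.

Definition cN (N : nat) : 'cV[int]_m := const_mx (N%:Z).

Lemma addcN (w : 'cV[int]_m) N j k : (w + cN N) j k = w j k + N%:Z.
Proof. by rewrite !mxE. Qed.

Definition gN (N : nat) (f : {mpoly K[n]}) : R :=
  \sum_(b <- msupp f) f@_b *: 'X_[mnmv (A *m mexp b + cN N)].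

Lemma psi_gN N f :
  (forall b, b \in msupp f -> forall j, `|(A *m mexp b) j ord0| <= N%:Z) ->
  psi f * tau (cN N) = tofrac (gN N f).
Proof.
move=> hN; rewrite psiE mulr_suml /gN rmorph_sum /= !big_seq; apply: eq_bigr => b hb.
rewrite -mulrA -tauD tau_nonneg; last first.
  move=> j; have := hN b hb j; rewrite addcN; move: ((A *m mexp b) j ord0) => x; lia.
by rewrite -mul_mpolyC rmorphM.
Qed.

Lemma gN_coef N f e :
  (gN N f)@_e = \sum_(b <- msupp f | mnmv (A *m mexp b + cN N) == e) f@_b.
Proof.
rewrite /gN raddf_sum /= [RHS]big_mkcond /=; apply: eq_bigr => b _.
by rewrite mcoeffZ mcoeffX; case: eqP; rewrite ?mulr1 ?mulr0.
Qed.

Definition boundf (f : {mpoly K[n]}) : nat :=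
  (\sum_(b <- msupp f) \sum_(j < m) `|(A *m mexp b) j ord0|)%N.
Definition boundw (w : 'cV[int]_m) : nat := (\sum_(j < m) `|w j ord0|)%N.

Lemma boundf_ok f N : (boundf f <= N)%N ->
  forall b, b \in msupp f -> forall j, `|(A *m mexp b) j ord0| <= N%:Z.
Proof.
move=> hN b hb j.
have h1 := leq_sum_mem (fun b => (\sum_(j < m) `|(A *m mexp b) j ord0|)%N) hb.
have h2 : (`|(A *m mexp b) j ord0| <= \sum_(j < m) `|(A *m mexp b) j ord0|)%N.
  by apply: (leq_sum_mem (fun j => `|(A *m mexp b) j ord0|%N)); rewrite mem_index_enum.
rewrite /boundf in hN.
have : (`|(A *m mexp b) j ord0|%N <= N)%N := leq_trans h2 (leq_trans h1 hN).
rewrite -abszE; lia.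
Qed.

Lemma boundw_ok w N : (boundw w <= N)%N -> forall j, `|w j ord0| <= N%:Z.
Proof.
move=> hN j.
have h2 : (`|w j ord0| <= boundw w)%N.
  by apply: (leq_sum_mem (fun j => `|w j ord0|%N)); rewrite mem_index_enum.
move: h2; rewrite -abszE; lia.
Qed.

Lemma mnmv_shift_eq N (w1 w2 : 'cV[int]_m) :
  (forall j, `|w1 j ord0| <= N%:Z) -> (forall j, `|w2 j ord0| <= N%:Z) ->
  (mnmv (w1 + cN N) == mnmv (w2 + cN N)) = (w1 == w2).
Proof.
move=> h1 h2; apply/eqP/eqP => [|->//] /mnmP h.
apply/matrixP => j k; rewrite fintype.ord1; have := h j; rewrite /mnmv !mnmE !mxE.
have := h1 j; have := h2 j; move: (w1 j ord0) (w2 j ord0) => x y; lia.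
Qed.

Lemma toric_psi f : toric_ideal K A f <-> psi f = 0.
Proof.
split => [ht|hp].
- pose N := boundf f.
  have hN := boundf_ok (leqnn N).
  have : psi f * tau (cN N) = 0.
    rewrite psi_gN // ; apply/eqP; rewrite tofrac_eq0; apply/eqP/mpolyP => e.
    rewrite gN_coef mcoeff0.
    pose w0 : 'cV[int]_m := \col_j ((e j)%:Z - N%:Z).
    rewrite -[RHS](ht w0) big_seq_cond [RHS]big_seq_cond; apply: eq_bigl => b.
    case hb: (b \in msupp f) => //=.
    apply/eqP/eqP => [he|hw].
      apply/matrixP => j k; rewrite fintype.ord1 /w0 [RHS]mxE; move/mnmP: he => /(_ j).
      rewrite /mnmv mnmE addcN; have := hN b hb j.
      move: ((A *m mexp b) j ord0) => x; lia.
    apply/mnmP => j; rewrite /mnmv !mnmE addcN hw /w0 [X in X + _]mxE; lia.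
  by move/eqP; rewrite mulf_eq0 (negbTE (tau_neq0 _)) orbF => /eqP.
- move=> w; pose N := (boundf f + boundw w)%N.
  have hN := boundf_ok (leq_addr (boundw w) (boundf f)).
  have hw := boundw_ok (leq_addl (boundf f) (boundw w)).
  have := psi_gN hN; rewrite hp mul0r => /esym /eqP; rewrite tofrac_eq0 => /eqP hg.
  have h0 := gN_coef N f (mnmv (w + cN N)); rewrite hg mcoeff0 in h0.
  rewrite [RHS]h0 big_seq_cond [RHS]big_seq_cond; apply: eq_bigl => b.
  case hb: (b \in msupp f) => //=.
  by rewrite mnmv_shift_eq // => j; apply: hN.
Qed.

Lemma tau_inj (w1 w2 : 'cV[int]_m) : tau w1 = tau w2 -> w1 = w2.
Proof.
move=> h.
have [N [h1 h2]] : exists N, (forall j, `|w1 j ord0| <= N%:Z) /\ (forall j, `|w2 j ord0| <= N%:Z).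
  exists (boundw w1 + boundw w2)%N; split; apply: boundw_ok.
    exact: leq_addr.
  exact: leq_addl.
have : tau (w1 + cN N) = tau (w2 + cN N) by rewrite !tauD h.
rewrite !tau_nonneg; first last.
- by move=> j; have := h1 j; rewrite addcN; move: (w1 j ord0) => x; lia.
- by move=> j; have := h2 j; rewrite addcN; move: (w2 j ord0) => x; lia.
move/eqP; rewrite tofrac_eq => /eqP /mpolyX_inj /eqP.
by rewrite mnmv_shift_eq // => /eqP.
Qed.

End Psi.

Section IdealGen.
Variables (K : fieldType) (n : nat).
Implicit Types (S T : {mpoly K[n]} -> Prop) (f g : {mpoly K[n]}).

Lemma ig_mem S f : S f -> ideal_gen S f.
Proof.
move=> h; exists [:: (1, f)]; split; first by move=> p; rewrite inE => /eqP ->.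
by rewrite big_seq1 mul1r.
Qed.

Lemma ig0 S : ideal_gen S 0.
Proof. by exists [::]; rewrite big_nil. Qed.

Lemma igD S f g : ideal_gen S f -> ideal_gen S g -> ideal_gen S (f + g).
Proof.
move=> [r1 [h1 ->]] [r2 [h2 ->]]; exists (r1 ++ r2); split; last by rewrite big_cat.
by move=> p; rewrite mem_cat => /orP [/h1|/h2].
Qed.

Lemma igM S q f : ideal_gen S f -> ideal_gen S (q * f).
Proof.
move=> [r [h ->]]; exists [seq (q * p.1, p.2) | p <- r]; split.
  by move=> p /mapP [p' hp' ->] /=; apply: h.
by rewrite big_map mulr_sumr; apply: eq_bigr => p _ /=; rewrite mulrA.
Qed.

Lemma igN S f : ideal_gen S f -> ideal_gen S (- f).
Proof. by move=> h; rewrite -mulN1r; apply: igM. Qed.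

Lemma igB S f g : ideal_gen S f -> ideal_gen S g -> ideal_gen S (f - g).
Proof. by move=> hf hg; apply: igD => //; apply: igN. Qed.

Lemma ig_sum S (I : Type) (r : seq I) (F : I -> {mpoly K[n]}) :
  (forall i, ideal_gen S (F i)) -> ideal_gen S (\sum_(i <- r) F i).
Proof.
move=> h; elim: r => [|i r IH]; first by rewrite big_nil; apply: ig0.
by rewrite big_cons; apply: igD.
Qed.

Lemma ig_sum_seq S (I : eqType) (r : seq I) (F : I -> {mpoly K[n]}) :
  (forall i, i \in r -> ideal_gen S (F i)) -> ideal_gen S (\sum_(i <- r) F i).
Proof.
move=> h; elim: r h => [|i r IH] h; first by rewrite big_nil; apply: ig0.
rewrite big_cons; apply: igD; first by apply: h; rewrite inE eqxx.
by apply: IH => j hj; apply: h; rewrite inE hj orbT.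
Qed.

Lemma ig_trans S T f : (forall p, S p -> ideal_gen T p) -> ideal_gen S f -> ideal_gen T f.
Proof.
move=> hST [r [h ->]]; apply: ig_sum_seq => p hp; apply: igM; apply: hST; exact: h.
Qed.

Lemma ig_mono S T f : (forall p, S p -> T p) -> ideal_gen S f -> ideal_gen T f.
Proof. by move=> h; apply: ig_trans => p /h; apply: ig_mem. Qed.

Lemma rad_mono S T f : (forall p, S p -> T p) -> Defs.rad S f -> Defs.rad T f.
Proof. by move=> h [k hk]; exists k; apply: ig_mono hk. Qed.

Lemma rad_trans S T f : (forall p, S p -> ideal_gen T p) -> Defs.rad S f -> Defs.rad T f.
Proof. by move=> h [k hk]; exists k; apply: ig_trans hk. Qed.

End IdealGen.

Section Toric.
Variables (K : fieldType) (m n : nat) (A : 'M[int]_(m, n)).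
Implicit Types (f g : {mpoly K[n]}).
Local Notation toric := (toric_ideal K A).

Lemma toric0 : toric 0.
Proof. by apply/toric_psi; rewrite psi0. Qed.

Lemma toricD f g : toric f -> toric g -> toric (f + g).
Proof. by move=> /toric_psi hf /toric_psi hg; apply/toric_psi; rewrite psiD hf hg addr0. Qed.

Lemma toricM q f : toric f -> toric (q * f).
Proof. by move=> /toric_psi hf; apply/toric_psi; rewrite psiM hf mulr0. Qed.

Lemma toric_rad f k : toric (f ^+ k) -> toric f.
Proof.
move=> /toric_psi h; apply/toric_psi.
have : psi A f ^+ k = 0.
  suff <- : psi A (f ^+ k) = psi A f ^+ k by [].
  elim: k {h} => [|k IH]; first by rewrite !expr0; case: (psi_rmorph K A) => _ ->.
  by rewrite !exprS psiM IH.
by move/eqP; rewrite expf_eq0 => /andP [_ /eqP].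
Qed.

Lemma toric_ig S f : (forall p, S p -> toric p) -> ideal_gen S f -> toric f.
Proof.
move=> hS [r [hr ->]]; elim: r hr => [|p r IH] hr; first by rewrite big_nil; apply: toric0.
rewrite big_cons; apply: toricD; first by apply: toricM; apply: hS; apply: hr; rewrite inE eqxx.
by apply: IH => q hq; apply: hr; rewrite inE hq orbT.
Qed.

Lemma toric_radS S f : (forall p, S p -> toric p) -> Defs.rad S f -> toric f.
Proof. by move=> hS [k hk]; apply: (toric_rad (k := k)); apply: toric_ig hk. Qed.

Lemma toricXX (a b : 'X_{1..n}) :
  toric ('X_[a] - 'X_[b]) <-> A *m mexp a = A *m mexp b.
Proof.
split.
  by move/toric_psi; rewrite psiD psiN !psiX => /eqP; rewrite subr_eq0 => /eqP /tau_inj.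
by move=> h; apply/toric_psi; rewrite psiD psiN !psiX h subrr.
Qed.

End Toric.

Lemma mexp_posneg (n : nat) (u : 'cV[int]_n) : mexp (posm u) - mexp (negm u) = u.
Proof.
apply/matrixP => i j; rewrite !mxE /posm /negm !mnmE fintype.ord1.
move: (u i ord0) => x; lia.
Qed.

Lemma binom_toric (K : fieldType) (m n : nat) (A : 'M[int]_(m, n)) (u : 'cV[int]_n) :
  toric_ideal K A (binom K u) <-> kerZ A u.
Proof.
rewrite /binom toricXX /kerZ -{3}(mexp_posneg u) mulmxBr.
by split => [->|/eqP]; rewrite ?subrr // subr_eq0 => /eqP.
Qed.

Section Gen.
Variables (K : fieldType) (m n : nat) (A : 'M[int]_(m, n)).

Definition Diffs (p : {mpoly K[n]}) : Prop :=
  exists a b : 'X_{1..n}, A *m mexp a = A *m mexp b /\ p = 'X_[a] - 'X_[b].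

Lemma gen_diffs (f : {mpoly K[n]}) : toric_ideal K A f -> ideal_gen Diffs f.
Proof.
move=> ht; set s := msupp f.
pose P b := fun b' : 'X_{1..n} => A *m mexp b' == A *m mexp b.
pose r b := nth 0%MM s (find (P b) s).
have hr b : b \in s -> A *m mexp (r b) = A *m mexp b.
  move=> hb; apply/eqP; rewrite /r; apply: (@nth_find _ 0%MM (P b)).
  by apply/hasP; exists b => //; rewrite /P.
have hrs b : b \in s -> r b \in s.
  by move=> hb; rewrite /r; apply: mem_nth; rewrite -has_find; apply/hasP; exists b => //; rewrite /P.
have hrr b b' : A *m mexp b = A *m mexp b' -> r b = r b'.
  by move=> e; rewrite /r /P e.
have -> : f = \sum_(b <- s) f@_b *: ('X_[b] - 'X_[r b]) + \sum_(b <- s) f@_b *: 'X_[r b].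
  rewrite -big_split /= {1}(mpolyE f); apply: eq_bigr => b _.
  by rewrite -scalerDr subrK.
have -> : \sum_(b <- s) f@_b *: 'X_[r b] = 0.
  apply/mpolyP => e; rewrite mcoeff0 raddf_sum /=.
  have [/hasP [b0 hb0 /eqP he]|hn] := boolP (has (fun b => r b == e) s).
    rewrite -[RHS](ht (A *m mexp b0)) big_mkcond [RHS]big_mkcond /=.
    rewrite !big_seq; apply: eq_bigr => b hb; rewrite mcoeffZ mcoeffX.
    case: (eqVneq (A *m mexp b) (A *m mexp b0)) => e1.
      by rewrite (hrr _ _ e1) he eqxx mulr1.
    case: eqP; rewrite ?mulr0 // => e2; exfalso.
    by move: e1; rewrite -(hr b hb) e2 -he (hr b0 hb0) eqxx.
  rewrite big_seq big1 // => b hb; rewrite mcoeffZ mcoeffX.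
  case: eqP; rewrite ?mulr0 // => e2; exfalso; move/negP: hn; apply.
  by apply/hasP; exists b => //; rewrite e2.
rewrite addr0; apply: ig_sum_seq => b hb; rewrite -mul_mpolyC; apply: igM.
apply: ig_mem; exists b, (r b); split => //; rewrite hr //.
Qed.

End Gen.

Lemma collect (T U : Type) (Pu : U -> Prop) (Rl : T -> U -> Prop) (l : list T) :
  (forall t, List.In t l -> exists u, Pu u /\ Rl t u) ->
  exists l' : list U, (forall u, List.In u l' -> Pu u) /\
    forall t, List.In t l -> exists u, List.In u l' /\ Rl t u.
Proof.
elim: l => [|t l IH] h; first by exists nil; split.
have [u [hu1 hu2]] := h t (or_introl erefl).
have [l' [h1 h2]] := IH (fun t' ht' => h t' (or_intror ht')).
exists (u :: l'); split.
  by move=> v /= [<-|/h1].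
move=> t' /= [<-|/h2 [v [hv1 hv2]]]; first by exists u; split; [left|].
by exists v; split; [right|].
Qed.

Definition lef (k : nat) (y x : 'I_k -> nat) := forall i, (y i <= x i)%N.

Definition dickson_prop (k : nat) (P : ('I_k -> nat) -> Prop) :=
  exists s : list ('I_k -> nat), (forall y, List.In y s -> P y) /\
    (forall x, P x -> exists y, List.In y s /\ lef y x).

Lemma lef_lift (k : nat) (y x : 'I_k.+1 -> nat) :
  (y ord0 <= x ord0)%N -> (forall j, y (lift ord0 j) <= x (lift ord0 j))%N -> lef y x.
Proof. by move=> h0 hj i; case: (unliftP ord0 i) => [j ->|->]. Qed.

Lemma combine_below (k : nat) (P : ('I_k.+1 -> nat) -> Prop) :
  (forall c, exists W, (forall y, List.In y W -> P y) /\
     forall x, P x -> x ord0 = c -> exists y, List.In y W /\ lef y x) ->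
  forall X, exists W, (forall y, List.In y W -> P y) /\
     forall x, P x -> (x ord0 < X)%N -> exists y, List.In y W /\ lef y x.
Proof.
move=> hc; elim => [|X [W [h1 h2]]]; first by exists nil; split.
have [Wc [h3 h4]] := hc X.
exists (W ++ Wc)%list; split.
  by move=> y hy; case: (List.in_app_or _ _ _ hy) => [/h1|/h3].
move=> x hx hlt; have [lt|e] : (x ord0 < X)%N \/ x ord0 = X by lia.
  have [y [hy1 hy2]] := h2 x hx lt; exists y; split => //; apply: List.in_or_app; left; exact: hy1.
have [y [hy1 hy2]] := h4 x hx e; exists y; split => //; apply: List.in_or_app; right; exact: hy1.
Qed.

Lemma maxlist_ge (k : nat) (W : list ('I_k.+1 -> nat)) x :
  List.In x W -> (x ord0 <= foldr (fun y acc => maxn (y ord0) acc) 0 W)%N.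
Proof.
elim: W => //= y W IH [<-|/IH h]; first exact: leq_maxl.
by apply: (leq_trans h); apply: leq_maxr.
Qed.

Lemma dickson (k : nat) : forall P : ('I_k -> nat) -> Prop, dickson_prop P.
Proof.
elim: k => [|k IH] P.
  have [[x hx]|hn] := classic (exists x, P x).
    exists (x :: nil); split; first by move=> y /= [<-|].
    by move=> x' _; exists x; split; [left|move=> [] ].
  exists nil; split => // x hx; exfalso; apply: hn; by exists x.
pose Q (t : 'I_k -> nat) := exists x, P x /\ forall j, x (lift ord0 j) = t j.
have [sQ [hQ1 hQ2]] := IH Q.
have [W [hW1 hW2]] := @collect _ _ (fun x => P x)
   (fun t x => forall j, x (lift ord0 j) = t j) _ hQ1.
pose X := foldr (fun y acc => maxn (y ord0) acc) 0 W.
have hc : forall c, exists Wc, (forall y, List.In y Wc -> P y) /\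
     forall x, P x -> x ord0 = c -> exists y, List.In y Wc /\ lef y x.
  move=> c.
  pose Pc (t : 'I_k -> nat) := exists x, P x /\ x ord0 = c /\ forall j, x (lift ord0 j) = t j.
  have [sc [hc1 hc2]] := IH Pc.
  have [Wc [hWc1 hWc2]] := @collect _ _ (fun x => P x /\ x ord0 = c)
     (fun t x => forall j, x (lift ord0 j) = t j) _
     (fun t ht => match hc1 t ht with ex_intro x (conj a (conj b d)) =>
                   ex_intro _ x (conj (conj a b) d) end).
  exists Wc; split; first by move=> y /hWc1 [].
  move=> x hx hx0.
  have [t [ht1 ht2]] := hc2 (fun j => x (lift ord0 j)) (ex_intro _ x (conj hx (conj hx0 (fun j => erefl)))).
  have [y [hy1 hy2]] := hWc2 t ht1.
  exists y; split => //; apply: lef_lift.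
    by have [_ ->] := hWc1 y hy1; rewrite hx0.
  by move=> j; rewrite hy2; apply: ht2.
have [W' [hW'1 hW'2]] := combine_below hc X.
exists (W ++ W')%list; split.
  by move=> y hy; case: (List.in_app_or _ _ _ hy) => [/hW1|/hW'1].
move=> x hx; case: (ltnP (x ord0) X) => hX.
  have [y [hy1 hy2]] := hW'2 x hx hX; exists y; split => //; apply: List.in_or_app; right; exact: hy1.
have [t [ht1 ht2]] := hQ2 (fun j => x (lift ord0 j)) (ex_intro _ x (conj hx (fun j => erefl))).
have [y [hy1 hy2]] := hW2 t ht1.
exists y; split; first by apply: List.in_or_app; left; exact: hy1.
apply: lef_lift.
  by apply: (leq_trans (maxlist_ge hy1)).
by move=> j; rewrite hy2; apply: ht2.
Qed.

Lemma In_mem (T : eqType) (x : T) (s : seq T) : List.In x s -> x \in s.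
Proof.
elim: s => //= y s IH [->|/IH h]; first by rewrite inE eqxx.
by rewrite inE h orbT.
Qed.

Section Graver.
Variables (m n : nat) (A : 'M[int]_(m, n)).

Definition enc (u : 'cV[int]_n) (i : 'I_(n + n)) : nat :=
  match split i with inl j => posm u j | inr j => negm u j end.

Lemma graver_list : exists G : seq 'cV[int]_n,
  (forall g, g \in G -> kerZ A g /\ g <> 0) /\
  forall u, kerZ A u -> u <> 0 -> exists g, g \in G /\
     (forall j, posm g j <= posm u j)%N /\ (forall j, negm g j <= negm u j)%N.
Proof.
pose P (x : 'I_(n + n) -> nat) := exists u, (kerZ A u /\ u <> 0) /\ forall i, x i = enc u i.
have [s [hs1 hs2]] := dickson P.
have [G [hG1 hG2]] := @collect _ _ (fun u => kerZ A u /\ u <> 0)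
   (fun x u => forall i, x i = enc u i) _ hs1.
exists G; split; first by move=> g; elim: G hG1 {hG2} => //= g' G IH h;
  rewrite inE => /orP [/eqP ->|/IH]; [apply: h; left | apply=> u hu; apply: h; right].
move=> u hu hu0.
have [y [hy1 hy2]] := hs2 (enc u) (ex_intro _ u (conj (conj hu hu0) (fun i => erefl))).
have [g [hg1 hg2]] := hG2 y hy1.
exists g; split; first exact: In_mem.
split => j.
  have := hy2 (lshift n j); rewrite hg2 /enc.
  by rewrite (_ : split (lshift n j) = inl j) // -[lshift n j]/(unsplit (inl j)) unsplitK.
have := hy2 (rshift n j); rewrite hg2 /enc.
by rewrite (_ : split (rshift n j) = inr j) // -[rshift n j]/(unsplit (inr j)) unsplitK.
Qed.

End Graver.

Definition BG (K : fieldType) (n : nat) (G : seq 'cV[int]_n) (p : {mpoly K[n]}) : Prop :=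
  exists u, u \in G /\ p = binom K u.

Definition mdist (n : nat) (b b' : 'X_{1..n}) : nat :=
  (\sum_(j < n) `|(b j)%:Z - (b' j)%:Z|)%N.

Lemma nonzero_entry (n : nat) (g : 'cV[int]_n) : g <> 0 -> exists j, g j ord0 != 0.
Proof.
move=> hg; case: (boolP [exists j, g j ord0 != 0]) => [/existsP //|].
rewrite negb_exists => /forallP h; exfalso; apply: hg.
by apply/matrixP => i k; rewrite fintype.ord1 mxE; apply/eqP; have := h i; rewrite negbK.
Qed.

Section FiberGen.
Variables (K : fieldType) (m n : nat) (A : 'M[int]_(m, n)) (G : seq 'cV[int]_n).
Hypothesis hG : forall g, g \in G -> kerZ A g /\ g <> 0.
Hypothesis hgr : forall u, kerZ A u -> u <> 0 -> exists g, g \in G /\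
     (forall j, posm g j <= posm u j)%N /\ (forall j, negm g j <= negm u j)%N.

Lemma fiber_gen d : forall b b' : 'X_{1..n}, mdist b b' = d ->
  A *m mexp b = A *m mexp b' -> ideal_gen (@BG K n G) ('X_[b] - 'X_[b']).
Proof.
elim/ltn_ind: d => d IH b b' hd hA.
case: (eqVneq b b') => [->|hne]; first by rewrite subrr; apply: ig0.
pose u := mexp b - mexp b'.
have hu : kerZ A u by rewrite /kerZ mulmxBr hA subrr.
have hu0 : u <> 0.
  move=> /eqP; rewrite subr_eq0 => /eqP e; move/eqP: hne; apply.
  apply/mnmP => j; move/matrixP: e => /(_ j ord0); rewrite !mxE; lia.
have [g [hgG [hp hn]]] := hgr hu hu0.
have [hgk hg0] := hG hgG.
pose c := (b - posm g + negm g)%MM.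
have hpj j : (posm g j <= b j)%N /\ (c j = b j - posm g j + negm g j)%N /\
   (negm g j <= negm u j)%N /\ (posm g j <= posm u j)%N.
  by rewrite /c mnmDE mnmBE; split; [have := hp j; rewrite /u /posm !mnmE !mxE; lia|split].
have hpb : (posm g <= b)%MM by apply/mnm_lepP => j; case: (hpj j).
have e1 : 'X_[b] - 'X_[c] = 'X_[b - posm g] * binom K g.
  rewrite {1}(_ : b = (b - posm g + posm g)%MM); last by rewrite submK.
  by rewrite /c !mpolyXD /binom mulrBr.
have hc : A *m mexp c = A *m mexp b'.
  suff -> : mexp c = mexp b - g by rewrite mulmxBr hA hgk subr0.
  apply/matrixP => j k; rewrite fintype.ord1 !mxE.
  have [h1 [h2 [h3 h4]]] := hpj j; rewrite h2.
  move: h1 h3 h4; rewrite /u /posm /negm !mnmE !mxE; move: (g j ord0) => x; lia.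
have hdist : (mdist c b' + \sum_(j < n) (posm g j + negm g j) = mdist b b')%N.
  rewrite /mdist -big_split /=; apply: eq_bigr => j _.
  have [h1 [h2 [h3 h4]]] := hpj j; rewrite h2.
  move: h1 h3 h4; rewrite /u /posm /negm !mnmE !mxE; move: (g j ord0) => x; lia.
have hpos : (0 < \sum_(j < n) (posm g j + negm g j))%N.
  have [j hj] := nonzero_entry hg0.
  apply: (leq_trans _ (leq_sum_mem (fun j => (posm g j + negm g j)%N) (mem_index_enum j))).
  move: hj; rewrite /posm /negm !mnmE; move: (g j ord0) => x; lia.
rewrite -(subrK 'X_[c] 'X_[b]) -addrA; apply: igD.
  by rewrite e1; apply: igM; apply: ig_mem; exists g.
apply: (IH (mdist c b')) => //; lia.
Qed.

End FiberGen.

Lemma graver (K : fieldType) (m n : nat) (A : 'M[int]_(m, n)) :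
  exists G : seq 'cV[int]_n, (forall g, g \in G -> kerZ A g) /\
    forall f, toric_ideal K A f -> ideal_gen (@BG K n G) f.
Proof.
have [G [hG hgr]] := graver_list A.
exists G; split; first by move=> g /hG [].
move=> f /gen_diffs; apply: ig_trans => p [a [b [hab ->]]].
exact: (@fiber_gen K m n A G hG hgr _ a b erefl hab).
Qed.

Lemma map_intr_eq0 (p q : nat) (X : 'M[int]_(p, q)) : map_mx intr X = 0 :> 'M[rat]_(p, q) -> X = 0.
Proof.
move/matrixP => h; apply/matrixP => i j; have := h i j; rewrite !mxE => /eqP.
by rewrite intr_eq0 => /eqP.
Qed.

Lemma kerQ_map (m n : nat) (A : 'M[int]_(m, n)) (u : 'cV[int]_n) :
  kerQ A (map_mx intr u) <-> kerZ A u.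
Proof.
rewrite /kerQ /kerZ -map_mxM; split; first exact: map_intr_eq0.
by move=> ->; rewrite map_mx0.
Qed.

Lemma span_ker (m n : nat) (A : 'M[int]_(m, n)) (C : 'cV[int]_n -> Prop) v :
  (forall u, C u -> kerZ A u) -> spanQ C v -> kerQ A v.
Proof.
move=> hC [r [hr ->]]; rewrite /kerQ mulmx_sumr big_seq big1 // => p hp.
by rewrite -scalemxAr (proj2 (kerQ_map A p.2) (hC _ (hr p hp))) scaler0.
Qed.

Lemma toric_ker_incl (K : fieldType) (m1 m2 n : nat) (A1 : 'M[int]_(m1, n)) (A2 : 'M[int]_(m2, n)) f :
  (forall u, kerZ A1 u -> kerZ A2 u) -> toric_ideal K A1 f -> toric_ideal K A2 f.
Proof.
move=> hk hf; have [G [hG hgen]] := graver K A1.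
apply: toric_ig (hgen f hf) => p [u [hu ->]].
by apply/binom_toric; apply: hk; apply: hG.
Qed.

Lemma min_exists (T : Type) (Q : seq T -> Prop) L : Q L ->
  exists L', Q L' /\ forall L'', (size L'' < size L')%N -> ~ Q L''.
Proof.
move: {2}(size L) (leqnn (size L)) => k; elim: k L => [|k IH] L hs hQ.
  exists L; split => // L''; rewrite (_ : size L = 0%N) //; lia.
have [[L'' [hs'' hQ'']]|hn] := classic (exists L'', (size L'' < size L)%N /\ Q L'').
  by apply: (IH L'') => //; lia.
exists L; split => // L'' hs'' hQ''; apply: hn; by exists L''.
Qed.

Definition pdec (T : Type) (P : T -> Prop) (x : T) : bool :=
  if excluded_middle_informative (P x) then true else false.

Lemma pdecP (T : Type) (P : T -> Prop) x : pdec P x <-> P x.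
Proof. by rewrite /pdec; case: excluded_middle_informative. Qed.

Section LtoR.
Variables (K : fieldType) (m n : nat) (A : 'M[int]_(m, n)).

Lemma lhs_to_rhs : radical_splittable K A ->
   exists C C1 C2 : 'cV[int]_n -> Prop,
     [/\ forall u, C u -> kerZ A u,
         min_binom_gen_up_to_rad A (fun f : {mpoly K[n]} => exists u, C u /\ f = binom K u),
         set_eq C (fun u => C1 u \/ C2 u),
         span_proper_in_kerQ A C1
       & span_proper_in_kerQ A C2].
Proof.
move=> [m1 [m2 [A1 [A2 [hp1 hp2 hrad hne1 hne2]]]]].
pose I12 := fun f : {mpoly K[n]} => toric_ideal K A1 f \/ toric_ideal K A2 f.
have hk1 u : kerZ A1 u -> kerZ A u.
  move=> /(binom_toric K) h; apply/(binom_toric K); apply/hrad.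
  by exists 1%N; rewrite expr1; apply: ig_mem; left.
have hk2 u : kerZ A2 u -> kerZ A u.
  move=> /(binom_toric K) h; apply/(binom_toric K); apply/hrad.
  by exists 1%N; rewrite expr1; apply: ig_mem; right.
have [G1 [hG1 hgen1]] := graver K A1.
have [G2 [hG2 hgen2]] := graver K A2.
pose L := G1 ++ G2.
pose Qp (L' : seq 'cV[int]_n) := {subset L' <= L} /\ set_eq (Defs.rad (@BG K n L')) (toric_ideal K A).
have hQL : Qp L.
  split => // f; split => hf.
    apply/hrad; apply: rad_trans hf => p [u [hu ->]]; apply: ig_mem.
    move: hu; rewrite mem_cat => /orP [/hG1 h|/hG2 h]; [left|right]; exact/binom_toric.
  move/hrad: hf; apply: rad_trans => p [/hgen1|/hgen2]; apply: ig_mono => q [u [hu ->]];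
    exists u; rewrite mem_cat hu ?orbT //.
have [Ls [[hsub hrs] hmin]] := min_exists hQL.
have hCk u : u \in Ls -> kerZ A u.
  by move/hsub; rewrite mem_cat => /orP [/hG1/hk1|/hG2/hk2].
pose C1 u := u \in Ls /\ u \in G1.
pose C2 u := u \in Ls /\ u \in G2.
have hsp (mi : nat) (Ai : 'M[int]_(mi, n)) (Ci : 'cV[int]_n -> Prop) :
   (forall u, Ci u -> kerZ Ai u) -> (forall u, Ci u -> kerZ A u) ->
   (forall u, kerZ Ai u -> kerZ A u) ->
   ~ set_eq (toric_ideal K Ai) (toric_ideal K A) -> span_proper_in_kerQ A Ci.
  move=> hCi hCA hAi hne; split; first by move=> v; apply: span_ker.
  apply: NNPP => hn; apply: hne => f; split; first by apply: toric_ker_incl.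
  apply: toric_ker_incl => u hu; apply/(kerQ_map Ai); apply: (span_ker hCi).
  apply: NNPP => hns; apply: hn; exists (map_mx intr u); split => //.
  exact/kerQ_map.
exists (fun u => u \in Ls), C1, C2; split.
- exact: hCk.
- split.
  + by move=> f [u [_ ->]]; exists (posm u), (negm u).
  + exact: hrs.
  + move=> S' hS'; case: (classic (exists f, (exists u, u \in Ls /\ f = binom K u) /\ ~ S' f)) => [[f [[u0 [hu0 ->]] hnS]]|]; last by left.
    right => hS'eq.
    pose L'' := filter (pdec (fun u => S' (binom K u))) Ls.
    apply: (hmin L'').
      rewrite size_filter -(count_predC (pdec (fun u => S' (binom K u))) Ls) -addn1 leq_add2l.
      rewrite -has_count; apply/hasP; exists u0 => //=; apply/negP => /pdecP //.
    split.
      by move=> u; rewrite mem_filter => /andP [_ /hsub].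
    move=> g; split => hg.
      apply/hS'eq; apply: rad_mono hg => p.
      by move=> [u [hu ->]]; move: hu; rewrite mem_filter => /andP [/pdecP].
    move/hS'eq: hg; apply: rad_mono => p.
    move=> hp; have [u [hu ep]] := hS' p hp; exists u; split => //.
    by rewrite mem_filter hu andbT; apply/pdecP; rewrite -ep.
- move=> u; split; last by case=> [[]|[]].
  by move=> hu; have := hsub u hu; rewrite mem_cat => /orP [h|h]; [left|right].
- apply: (hsp _ A1) => //; last by move=> u [h _]; apply: hCk.
  by move=> u [_ /hG1].
- apply: (hsp _ A2) => //; last by move=> u [h _]; apply: hCk.
  by move=> u [_ /hG2].
Qed.

End LtoR.

Lemma max_exists (P : nat -> Prop) (N : nat) :
  (exists k, P k) -> (forall k, P k -> (k <= N)%N) ->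
  exists k, P k /\ forall k', P k' -> (k' <= k)%N.
Proof.
move=> [k hk] hN.
suff : forall d k, P k -> (N - k <= d)%N ->
   exists k0, P k0 /\ forall k', P k' -> (k' <= k0)%N.
  by move=> h; apply: (h (N - k)%N k hk (leqnn _)).
move=> d; elim: d {k hk} => [|d IH] k hk hd.
  exists k; split => // k' hk'; have := hN k' hk'; lia.
have [[k' [hk' hlt]]|hn] := classic (exists k', P k' /\ (k < k')%N).
  apply: (IH k' hk'); have := hN k' hk'; lia.
exists k; split => // k' hk'; case: (leqP k' k) => // hlt; exfalso; apply: hn.
by exists k'.
Qed.

Definition Mof (n r : nat) (cs : 'I_r -> 'cV[int]_n) : 'M[rat]_(r, n) :=
  \matrix_(i, j) ((cs i j ord0)%:~R : rat).

Lemma row_Mof (n r : nat) (cs : 'I_r -> 'cV[int]_n) (i : 'I_r) :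
  row i (Mof cs) = (map_mx intr (cs i))^T.
Proof. by apply/matrixP => a b; rewrite !mxE fintype.ord1. Qed.

Lemma Mof_ext (n r : nat) (cs : 'I_r -> 'cV[int]_n) (c : 'cV[int]_n) :
  Mof (fun i : 'I_(r + 1) => match split i with inl i' => cs i' | inr _ => c end) =
  col_mx (Mof cs) (map_mx intr c)^T.
Proof.
apply/matrixP => a b; rewrite !mxE; case: (split a) => [a'|a']; rewrite !mxE ?fintype.ord1 //.
Qed.

Lemma separate (n : nat) (C : 'cV[int]_n -> Prop) (w : 'cV[rat]_n) :
  ~ spanQ C w -> exists y : 'cV[rat]_n,
    (forall c, C c -> (map_mx intr c)^T *m y = 0) /\ w^T *m y <> 0.
Proof.
move=> hw.
pose P k := exists r (cs : 'I_r -> 'cV[int]_n), (forall i, C (cs i)) /\ \rank (Mof cs) = k.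
have [k [[r [cs [hcs hrk]]] hmax]] : exists k, P k /\ forall k', P k' -> (k' <= k)%N.
  apply: (max_exists (N := n)).
    exists 0%N, 0%N, (fun _ => 0); split => [[? ?] //|].
    by apply/eqP; rewrite -leqn0; apply: rank_leq_row.
  by move=> k' [r [cs [_ <-]]]; apply: rank_leq_col.
pose M := Mof cs.
have hsubC c : C c -> ((map_mx intr c)^T <= M)%MS.
  move=> hc; apply: NNPP => hn.
  pose cs' := fun i : 'I_(r + 1) => match split i with inl i' => cs i' | inr _ => c end.
  have hP : P (\rank (Mof cs')).
    exists (r + 1)%N, cs'; split => // i; rewrite /cs'; case: (split i) => //.
  have := hmax _ hP; rewrite Mof_ext -hrk -/M.
  have hsub : (M <= col_mx M (map_mx intr c)^T)%MS by rewrite -addsmxE addsmxSl.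
  have hle := mxrank_leqif_sup hsub.
  rewrite leqNgt (ltn_leqif hle) col_mx_sub submx_refl /=.
  by rewrite negbK.
have hspan : ~ (w^T <= M)%MS.
  move/submxP => [x hx]; apply: hw.
  exists [seq (x 0 i, cs i) | i <- index_enum 'I_r]; split.
    by move=> p /mapP [i _ ->]; apply: hcs.
  rewrite big_map -[w]trmxK hx mulmx_sum_row linear_sum /=; apply: eq_bigr => i _.
  by rewrite linearZ /= row_Mof trmxK.
move: hspan; rewrite submxE => hR.
have [j hj] : exists j, (w^T *m cokermx M) 0 j != 0.
  case: (boolP [exists j, (w^T *m cokermx M) 0 j != 0]) => [/existsP //|].
  rewrite negb_exists => /forallP h; exfalso; apply: hR; apply/eqP.
  by apply/matrixP => a b; rewrite fintype.ord1 [RHS]mxE; apply/eqP; have := h b; rewrite negbK.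
exists (cokermx M *m delta_mx j 0); split.
  move=> c hc; have := hsubC c hc; rewrite submxE => /eqP h.
  by rewrite mulmxA h mul0mx.
rewrite mulmxA -colE => /matrixP /(_ 0 0); rewrite [LHS]mxE [RHS]mxE => h0.
by move/eqP: hj; apply.
Qed.

Lemma intvec (n : nat) (v : 'cV[rat]_n) : exists (d : int) (z : 'cV[int]_n),
  0 < d /\ map_mx intr z = d%:~R *: v.
Proof.
exists (\prod_(i < n) denq (v i ord0)),
  (\col_i (numq (v i ord0) * \prod_(k < n | k != i) denq (v k ord0))).
split; first by apply: prodr_gt0 => i _; apply: denq_gt0.
apply/matrixP => i j; rewrite fintype.ord1 !mxE.
have -> : \prod_(i0 < n) denq (v i0 ord0) = denq (v i ord0) * \prod_(k < n | k != i) denq (v k ord0).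
  by rewrite [LHS](bigD1 i).
rewrite !intrM.
rewrite -{3}(divq_num_den (v i ord0)).
have hd : (denq (v i ord0))%:~R != 0 :> rat by rewrite intr_eq0 denq_neq0.
field; rewrite intr_eq0; exact: denq_neq0.
Qed.

Section Build.
Variables (K : fieldType) (m n : nat) (A : 'M[int]_(m, n)).

Lemma build (Ci : 'cV[int]_n -> Prop) : pointed A ->
  (forall u, Ci u -> kerZ A u) -> span_proper_in_kerQ A Ci ->
  exists mi (Ai : 'M[int]_(mi, n)), [/\ pointed Ai, (forall u, Ci u -> kerZ Ai u),
     (forall u, kerZ Ai u -> kerZ A u) & ~ set_eq (toric_ideal K Ai) (toric_ideal K A)].
Proof.
move=> hpt hCi [_ [w [hwk hws]]].
have [y [hy hwy]] := separate hws.
have [d [z [hd hz]]] := intvec y.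
have [e [u [he hu]]] := intvec w.
have hker x : kerZ (col_mx A z^T) x <-> kerZ A x /\ z^T *m x = 0.
  rewrite /kerZ mul_col_mx; split.
    by move/eqP; rewrite col_mx_eq0 => /andP [/eqP -> /eqP ->].
  by move=> [-> ->]; apply/eqP; rewrite col_mx_eq0 !eqxx.
have hd0 : (d%:~R : rat) != 0 by rewrite intr_eq0; apply: lt0r_neq0.
have he0 : (e%:~R : rat) != 0 by rewrite intr_eq0; apply: lt0r_neq0.
have hku : kerZ A u.
  apply/(kerQ_map A); rewrite /kerQ hu -scalemxAr hwk scaler0 //.
have hzu : z^T *m u <> 0.
  move=> h0; apply: hwy.
  have : map_mx intr (z^T *m u) = (d%:~R * e%:~R : rat) *: (w^T *m y)^T.
    rewrite map_mxM -map_trmx hz hu linearZ /= linearZ /= -scalemxAl scalerA.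
    by rewrite trmx_mul trmxK mulrC.
  rewrite h0 map_mx0 => /esym /eqP; rewrite scaler_eq0 mulf_eq0 (negbTE hd0) (negbTE he0) /=.
  by move/eqP => h; rewrite -[w^T *m y]trmxK h trmx0.
exists (m + 1)%N, (col_mx A z^T); split.
- by move=> x /hker [hx _]; apply: hpt.
- move=> c hc; apply/hker; split; first exact: hCi.
  apply: map_intr_eq0; rewrite map_mxM -map_trmx hz linearZ /= -scalemxAl.
  rewrite -[X in _ *: X]trmxK trmx_mul trmxK hy ?linear0 ?scaler0 //.
- by move=> x /hker [].
- move=> hs; apply: hzu.
  have : toric_ideal K A (binom K u) by apply/binom_toric.
  by move/hs/binom_toric/hker => [].
Qed.

End Build.

Lemma rhs_to_lhs (K : fieldType) (m n : nat) (A : 'M[int]_(m, n)) : pointed A ->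
  (exists C C1 C2 : 'cV[int]_n -> Prop,
     [/\ forall u, C u -> kerZ A u,
         min_binom_gen_up_to_rad A (fun f : {mpoly K[n]} => exists u, C u /\ f = binom K u),
         set_eq C (fun u => C1 u \/ C2 u),
         span_proper_in_kerQ A C1
       & span_proper_in_kerQ A C2]) -> radical_splittable K A.
Proof.
move=> hpt [C [C1 [C2 [hCk [hbin hradC hminC] hset hsp1 hsp2]]]].
have [m1 [A1 [hp1 hC1 hk1 hne1]]] := build K hpt (fun u h => hCk u (proj2 (hset u) (or_introl h))) hsp1.
have [m2 [A2 [hp2 hC2 hk2 hne2]]] := build K hpt (fun u h => hCk u (proj2 (hset u) (or_intror h))) hsp2.
exists m1, m2, A1, A2; split => // f; split => hf.
  move/hradC: hf; apply: rad_mono => p [u [hu ->]].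
  by case: (proj1 (hset u) hu) => h; [left|right]; apply/binom_toric; [apply: hC1|apply: hC2].
apply: toric_radS hf => p [h|h]; apply: toric_ker_incl h; [exact: hk1|exact: hk2].
Qed.

Unset Implicit Arguments.

Theorem corollary2p2 (K : fieldType) (m n : nat) (A : 'M[int]_(m, n)) :
  pointed A ->
  (radical_splittable K A <->
   exists C C1 C2 : 'cV[int]_n -> Prop,
     [/\ forall u, C u -> kerZ A u,
         min_binom_gen_up_to_rad A (fun f : {mpoly K[n]} => exists u, C u /\ f = binom K u),
         set_eq C (fun u => C1 u \/ C2 u),
         span_proper_in_kerQ A C1
       & span_proper_in_kerQ A C2]).
Proof.
move=> hpt; split; first exact: lhs_to_rhs.
exact: rhs_to_lhs.
Qed.
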